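(* The map $F:\mathcal F_D\to[\mathcal F_C\to\mathcal F_R]$ is an isomorphism with inverse $G$, and $H:\mathcal F_C\to\mathcal F_D\times\mathcal F_C$ is an isomorphism with inverse $K$, where, for $d\in\mathcal F_D$, $k\in\mathcal F_C$ and $f\in[\mathcal F_C\to\mathcal F_R]$: - $F\,d\,k=d\cdot k$; - $G\,f=\uparrow_D\{\bigwedge_{i\in I}\kappa_i\to\rho_i\mid \forall i\in I:\ \rho_i\in f(\uparrow_C\kappa_i)\}$; - $H\,k=\langle\{\delta\mid\exists\kappa.\ \delta\times\kappa\in k\},\{\kappa\mid\exists\delta.\ \delta\times\kappa\in k\}\rangle$; - $K\langle d,k\rangle=d::k$.
   Context: Let $R$ be an $\omega$-algebraic lattice, with compact elements $\mathcal K(R)$, bottom $\bot$ and join $\sqcup$. Type languages: - $\Lambda_R$: $\rho::=\psi_a\mid\omega\mid\rho\wedge\rho$, with one constant $\psi_a$ for each $a\in\mathcal K(R)$. - $\Lambda_D$: $\delta::=\rho\mid\kappa\to\rho\mid\omega\mid\delta\wedge\delta$, with $\rho\in\Lambda_R$. - $\Lambda_C$: $\kappa::=\delta\times\kappa\mid\omega\mid\kappa\wedge\kappa$. An intersection type theory is a reflexive, transitive relation $\le$ satisfying $\sigma\wedge\tau\le\sigma$, $\sigma\wedge\tau\le\tau$, $\sigma\le\omega$, and, if $\rho\le\sigma$ and $\rho\le\tau$, then $\rho\le\sigma\wedge\tau$. We write $\sigma\sim\tau$ when $\sigma\le\tau\le\sigma$. The relations are defined as follows: - $\le_R$ is the least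 intersection type theory on $\Lambda_R$ with $\psi_\bot\sim_R\omega$ and $\psi_{a\sqcup b}\sim_R\psi_a\wedge\psi_b$. - $\le_D$ and $\le_C$ are the least intersection type theories on $\Lambda_D$ and $\Lambda_C$ closed under the following: - if $\rho_1\le_R\rho_2$ then $\rho_1\le_D\rho_2$; - $\omega\le_D\omega\to\omega$; - $\psi_a\le_D\omega\to\psi_a$ and $\omega\to\psi_a\le_D\psi_a$; - $\omega\le_C\omega\times\omega$; - $(\kappa\to\rho_1)\wedge(\kappa\to\rho_2)\le_D\kappa\to(\rho_1\wedge\rho_2)$; - $(\delta_1\times\kappa_1)\wedge(\delta_2\times\kappa_2)\le_C(\delta_1\wedge\delta_2)\times(\kappa_1\wedge\kappa_2)$; - if $\kappa_2\le_C\kappa_1$ and $\rho_1\le_R\rho_2$ then $\kappa_1\to\rho_1\le_D\kappa_2\to\rho_2$; - if $\delta_1\le_D\delta_2$ and $\kappa_1\le_C\kappa_2$ then $\delta_1\times\kappa_1\le_C\delta_2\times\kappa_2$. A filter over $(\Lambda_A,\le_A)$ is a set containing $\omega$, upward closed under $\le_A$, and closed under $\wedge$. $\mathcal F_A$ is the set of filters, ordered by $\subseteq$. For a set $S$ of types, $\uparrow_A S$ is its upward closure, and $\uparrow_A\sigma=\{\tau\mid\sigma\le_A\tau\}$. $[\mathcal F_C\to\mathcal F_R]$ is the set of Scott-continuous functions, ordered pointwise, and $\mathcal F_D\times\mathcal F_C$ is ordered componentwise. The two operations are: - $d\cdot k=\uparrow_R\{\rho\in\Lambda_R\mid \exists\,\kappa\to\rho\in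 d \text{ with }\kappa\in k\}$; - $d::k=\uparrow_C\{\bigwedge_{i\in I}\delta_i\times\kappa_i\mid\forall i\in I:\ \delta_i\in d,\ \kappa_i\in k\}$. In both, $I$ ranges over finite sets, and the empty intersection is $\omega$. *)

(* Defs.v *)
From Stdlib Require Import List.
Import ListNotations.


Definition is_lub {T} (le : T -> T -> Prop) (S : T -> Prop) (x : T) : Prop :=
  (forall y, S y -> le y x) /\ (forall z, (forall y, S y -> le y z) -> le x z).

Definition directed {T} (le : T -> T -> Prop) (S : T -> Prop) : Prop :=
  (exists x, S x) /\
  (forall x y, S x -> S y -> exists z, S z /\ le x z /\ le y z).

Definition is_compact {T} (le : T -> T -> Prop) (c : T) : Prop :=
  forall S, directed le S -> forall s, is_lub le S s -> le c s ->
  exists x, S x /\ le c x.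

Definition omega_algebraic_lattice {T} (le : T -> T -> Prop) : Prop :=
  (forall x, le x x) /\
  (forall x y z, le x y -> le y z -> le x z) /\
  (forall x y, le x y -> le y x -> x = y) /\
  (forall S : T -> Prop, exists x, is_lub le S x) /\
  (forall x, is_lub le (fun c => is_compact le c /\ le c x) x) /\
  (exists e : nat -> T, forall c, is_compact le c -> exists n, e n = c).

Definition compacts {T} (le : T -> T -> Prop) := {c : T | is_compact le c}.

Definition is_bot {T} (le : T -> T -> Prop) (a : compacts le) : Prop :=
  is_lub le (fun _ => False) (proj1_sig a).

Definition is_join {T} (le : T -> T -> Prop) (a b c : compacts le) : Prop :=
  is_lub le (fun x => x = proj1_sig a \/ x = proj1_sig b) (proj1_sig c).

(* Lambda_R is literally a subset of Lambda_D via [embR].              *)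

Inductive tyR (K : Type) : Type :=
| psiR (a : K) | omR | andR (r1 r2 : tyR K).

Inductive tyD (K : Type) : Type :=
| psiD (a : K) | arrD (k : tyC K) (r : tyR K) | omD | andD (d1 d2 : tyD K)
with tyC (K : Type) : Type :=
| prdC (d : tyD K) (k : tyC K) | omC | andC (k1 k2 : tyC K).

Arguments psiR {K} a. Arguments omR {K}. Arguments andR {K} r1 r2.
Arguments psiD {K} a. Arguments arrD {K} k r. Arguments omD {K}.
Arguments andD {K} d1 d2.
Arguments prdC {K} d k. Arguments omC {K}. Arguments andC {K} k1 k2.

Fixpoint embR {K} (r : tyR K) : tyD K :=
  match r with
  | psiR a => psiD a
  | omR => omD
  | andR r1 r2 => andD (embR r1) (embR r2)
  end.

(* The relations <=_R, <=_D, <=_C (least, hence inductive).            *)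

Inductive leR {K} (isbot : K -> Prop) (isjoin : K -> K -> K -> Prop)
  : tyR K -> tyR K -> Prop :=
| leR_refl r : leR isbot isjoin r r
| leR_trans r1 r2 r3 : leR isbot isjoin r1 r2 -> leR isbot isjoin r2 r3 ->
    leR isbot isjoin r1 r3
| leR_andl r1 r2 : leR isbot isjoin (andR r1 r2) r1
| leR_andr r1 r2 : leR isbot isjoin (andR r1 r2) r2
| leR_top r : leR isbot isjoin r omR
| leR_glb r s t : leR isbot isjoin r s -> leR isbot isjoin r t ->
    leR isbot isjoin r (andR s t)
| leR_bot1 a : isbot a -> leR isbot isjoin (psiR a) omR
| leR_bot2 a : isbot a -> leR isbot isjoin omR (psiR a)
| leR_join1 a b c : isjoin a b c ->
    leR isbot isjoin (psiR c) (andR (psiR a) (psiR b))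
| leR_join2 a b c : isjoin a b c ->
    leR isbot isjoin (andR (psiR a) (psiR b)) (psiR c).

Inductive leD {K} (isbot : K -> Prop) (isjoin : K -> K -> K -> Prop)
  : tyD K -> tyD K -> Prop :=
| leD_refl d : leD isbot isjoin d d
| leD_trans d1 d2 d3 : leD isbot isjoin d1 d2 -> leD isbot isjoin d2 d3 ->
    leD isbot isjoin d1 d3
| leD_andl d1 d2 : leD isbot isjoin (andD d1 d2) d1
| leD_andr d1 d2 : leD isbot isjoin (andD d1 d2) d2
| leD_top d : leD isbot isjoin d omD
| leD_glb d s t : leD isbot isjoin d s -> leD isbot isjoin d t ->
    leD isbot isjoin d (andD s t)
| leD_R r1 r2 : leR isbot isjoin r1 r2 -> leD isbot isjoin (embR r1) (embR r2)
| leD_omarr : leD isbot isjoin omD (arrD omC omR)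
| leD_psiarr a : leD isbot isjoin (psiD a) (arrD omC (psiR a))
| leD_arrpsi a : leD isbot isjoin (arrD omC (psiR a)) (psiD a)
| leD_arrand k r1 r2 :
    leD isbot isjoin (andD (arrD k r1) (arrD k r2)) (arrD k (andR r1 r2))
| leD_arr k1 k2 r1 r2 : leC isbot isjoin k2 k1 -> leR isbot isjoin r1 r2 ->
    leD isbot isjoin (arrD k1 r1) (arrD k2 r2)
with leC {K} (isbot : K -> Prop) (isjoin : K -> K -> K -> Prop)
  : tyC K -> tyC K -> Prop :=
| leC_refl k : leC isbot isjoin k k
| leC_trans k1 k2 k3 : leC isbot isjoin k1 k2 -> leC isbot isjoin k2 k3 ->
    leC isbot isjoin k1 k3
| leC_andl k1 k2 : leC isbot isjoin (andC k1 k2) k1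
| leC_andr k1 k2 : leC isbot isjoin (andC k1 k2) k2
| leC_top k : leC isbot isjoin k omC
| leC_glb k s t : leC isbot isjoin k s -> leC isbot isjoin k t ->
    leC isbot isjoin k (andC s t)
| leC_omprd : leC isbot isjoin omC (prdC omD omC)
| leC_prdand d1 k1 d2 k2 :
    leC isbot isjoin (andC (prdC d1 k1) (prdC d2 k2))
                     (prdC (andD d1 d2) (andC k1 k2))
| leC_prd d1 d2 k1 k2 : leD isbot isjoin d1 d2 -> leC isbot isjoin k1 k2 ->
    leC isbot isjoin (prdC d1 k1) (prdC d2 k2).

Definition LeR {T} (le : T -> T -> Prop) := leR (@is_bot T le) (@is_join T le).
Definition LeD {T} (le : T -> T -> Prop) := leD (@is_bot T le) (@is_join T le).
Definition LeC {T} (le : T -> T -> Prop) := leC (@is_bot T le) (@is_join T le).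

Definition subset {A} (X Y : A -> Prop) : Prop := forall a, X a -> Y a.
Definition seteq {A} (X Y : A -> Prop) : Prop := forall a, X a <-> Y a.

Definition is_filter {A} (le : A -> A -> Prop) (om : A) (andA : A -> A -> A)
  (X : A -> Prop) : Prop :=
  X om /\ (forall s t, X s -> le s t -> X t) /\
  (forall s t, X s -> X t -> X (andA s t)).

Definition upset {A} (le : A -> A -> Prop) (S : A -> Prop) : A -> Prop :=
  fun t => exists s, S s /\ le s t.
Definition upone {A} (le : A -> A -> Prop) (s : A) : A -> Prop :=
  fun t => le s t.

Definition filterR {T} (le : T -> T -> Prop) := is_filter (LeR le) omR andR.
Definition filterD {T} (le : T -> T -> Prop) := is_filter (LeD le) omD andD.
Definition filterC {T} (le : T -> T -> Prop) := is_filter (LeC le) omC andC.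

Fixpoint bigandD {K} (l : list (tyD K)) : tyD K :=
  match l with
  | [] => omD
  | [x] => x
  | x :: l' => andD x (bigandD l')
  end.
Fixpoint bigandC {K} (l : list (tyC K)) : tyC K :=
  match l with
  | [] => omC
  | [x] => x
  | x :: l' => andC x (bigandC l')
  end.

Definition union_fam {A} (D : (A -> Prop) -> Prop) : A -> Prop :=
  fun a => exists X, D X /\ X a.

Definition scott_cont {T} (le : T -> T -> Prop)
  (f : (tyC (compacts le) -> Prop) -> (tyR (compacts le) -> Prop)) : Prop :=
  (forall k, filterC le k -> filterR le (f k)) /\
  (forall k k', filterC le k -> filterC le k' -> subset k k' ->
     subset (f k) (f k')) /\
  (forall D : (tyC (compacts le) -> Prop) -> Prop,
     (forall k, D k -> filterC le k) -> directed subset D ->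
     seteq (f (union_fam D)) (fun r => exists k, D k /\ f k r)).

Definition fun_le {T} (le : T -> T -> Prop)
  (f g : (tyC (compacts le) -> Prop) -> (tyR (compacts le) -> Prop)) : Prop :=
  forall k, filterC le k -> subset (f k) (g k).

Definition app {T} (le : T -> T -> Prop) (d : tyD (compacts le) -> Prop)
  (k : tyC (compacts le) -> Prop) : tyR (compacts le) -> Prop :=
  upset (LeR le) (fun r => exists kap, d (arrD kap r) /\ k kap).

Definition cons {T} (le : T -> T -> Prop) (d : tyD (compacts le) -> Prop)
  (k : tyC (compacts le) -> Prop) : tyC (compacts le) -> Prop :=
  upset (LeC le) (fun c => exists l : list (tyD (compacts le) * tyC (compacts le)),
    (forall p, In p l -> d (fst p) /\ k (snd p)) /\
    c = bigandC (map (fun p => prdC (fst p) (snd p)) l)).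

Definition Fmap {T} (le : T -> T -> Prop) (d : tyD (compacts le) -> Prop) :=
  fun k => app le d k.

Definition Gmap {T} (le : T -> T -> Prop)
  (f : (tyC (compacts le) -> Prop) -> (tyR (compacts le) -> Prop))
  : tyD (compacts le) -> Prop :=
  upset (LeD le) (fun d => exists l : list (tyC (compacts le) * tyR (compacts le)),
    (forall p, In p l -> f (upone (LeC le) (fst p)) (snd p)) /\
    d = bigandD (map (fun p => arrD (fst p) (snd p)) l)).

Definition Hmap {T} (le : T -> T -> Prop) (k : tyC (compacts le) -> Prop)
  : (tyD (compacts le) -> Prop) * (tyC (compacts le) -> Prop) :=
  (fun d => exists kap, k (prdC d kap), fun kap => exists d, k (prdC d kap)).

Definition Kmap {T} (le : T -> T -> Prop)
  (dk : (tyD (compacts le) -> Prop) * (tyC (compacts le) -> Prop))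
  : tyC (compacts le) -> Prop :=
  cons le (fst dk) (snd dk).

Definition F_iso_G {T} (le : T -> T -> Prop) : Prop :=
  (forall d, filterD le d -> scott_cont le (Fmap le d)) /\
  (forall f, scott_cont le f -> filterD le (Gmap le f)) /\
  (forall d d', filterD le d -> filterD le d' -> subset d d' ->
     fun_le le (Fmap le d) (Fmap le d')) /\
  (forall f g, scott_cont le f -> scott_cont le g -> fun_le le f g ->
     subset (Gmap le f) (Gmap le g)) /\
  (forall d, filterD le d -> seteq (Gmap le (Fmap le d)) d) /\
  (forall f, scott_cont le f -> forall k, filterC le k ->
     seteq (Fmap le (Gmap le f) k) (f k)).

Definition H_iso_K {T} (le : T -> T -> Prop) : Prop :=
  (forall k, filterC le k -> filterD le (fst (Hmap le k)) /\
                             filterC le (snd (Hmap le k))) /\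
  (forall d k, filterD le d -> filterC le k -> filterC le (Kmap le (d, k))) /\
  (forall k k', filterC le k -> filterC le k' -> subset k k' ->
     subset (fst (Hmap le k)) (fst (Hmap le k')) /\
     subset (snd (Hmap le k)) (snd (Hmap le k'))) /\
  (forall d k d' k', filterD le d -> filterC le k -> filterD le d' ->
     filterC le k' -> subset d d' -> subset k k' ->
     subset (Kmap le (d, k)) (Kmap le (d', k'))) /\
  (forall k, filterC le k -> seteq (Kmap le (Hmap le k)) k) /\
  (forall d k, filterD le d -> filterC le k ->
     seteq (fst (Hmap le (Kmap le (d, k)))) d /\
     seteq (snd (Hmap le (Kmap le (d, k)))) k).

(* Main.v *)
Require Import Defs.
From Stdlib Require Import List.
Import ListNotations.

Fixpoint bigand {A} (om : A) (an : A -> A -> A) (l : list A) : A :=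
  match l with
  | [] => om
  | [x] => x
  | x :: l' => an x (bigand om an l')
  end.

Lemma bigandD_eq {K} (l : list (tyD K)) : bigandD l = bigand omD andD l.
Proof.
  induction l as [|x l IH]; [reflexivity|]. destruct l as [|y l]; [reflexivity|].
  change (andD x (bigandD (y::l)) = andD x (bigand omD andD (y::l))).
  rewrite IH. reflexivity.
Qed.

Lemma bigandC_eq {K} (l : list (tyC K)) : bigandC l = bigand omC andC l.
Proof.
  induction l as [|x l IH]; [reflexivity|]. destruct l as [|y l]; [reflexivity|].
  change (andC x (bigandC (y::l)) = andC x (bigand omC andC (y::l))).
  rewrite IH. reflexivity.
Qed.

Section Gen.
Variables (A : Type) (le : A -> A -> Prop) (om : A) (an : A -> A -> A).
Hypotheses (Hrefl : forall x, le x x)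
  (Htrans : forall x y z, le x y -> le y z -> le x z)
  (Handl : forall x y, le (an x y) x) (Handr : forall x y, le (an x y) y)
  (Htop : forall x, le x om)
  (Hglb : forall x y z, le x y -> le x z -> le x (an y z)).

Lemma big_hd x l : le (bigand om an (x :: l)) x.
Proof. destruct l; simpl; auto. Qed.
Lemma big_tl x l : le (bigand om an (x :: l)) (bigand om an l).
Proof. destruct l; simpl; auto. Qed.
Lemma big_glb t x l : le t x -> le t (bigand om an l) -> le t (bigand om an (x :: l)).
Proof. destruct l; simpl; auto. Qed.
Lemma big_app_l a b : le (bigand om an (a ++ b)) (bigand om an a).
Proof.
  induction a as [|x a IH]; simpl app. apply Htop.
  apply big_glb. apply big_hd. eapply Htrans. apply big_tl. exact IH.
Qed.
Lemma big_app_r a b : le (bigand om an (a ++ b)) (bigand om an b).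
Proof.
  induction a as [|x a IH]; simpl app. apply Hrefl.
  eapply Htrans. apply big_tl. exact IH.
Qed.
Lemma big_app_glb a b : le (bigand om an (a ++ b)) (an (bigand om an a) (bigand om an b)).
Proof. apply Hglb. apply big_app_l. apply big_app_r. Qed.
End Gen.

Lemma big_pred {A} (om : A) an (P : A -> Prop) l :
  P om -> (forall a b, P a -> P b -> P (an a b)) -> (forall x, In x l -> P x) ->
  P (bigand om an l).
Proof.
  intros H0 Ha. induction l as [|x l IH]; simpl; intros H; auto.
  destruct l as [|y l']. apply H; left; auto.
  apply Ha. apply H; left; auto. apply IH; intros; apply H; right; auto.
Qed.

Section Main.
Variables (T : Type) (le : T -> T -> Prop).
Local Notation K := (compacts le).
Local Notation lR := (leR (@is_bot T le) (@is_join T le)).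
Local Notation lD := (leD (@is_bot T le) (@is_join T le)).
Local Notation lC := (leC (@is_bot T le) (@is_join T le)).

Lemma bD_glb (a b : list (tyD K)) : lD (bigandD (a ++ b)) (andD (bigandD a) (bigandD b)).
Proof. rewrite !bigandD_eq. apply big_app_glb; intros; eauto using leD_refl, leD_trans, leD_andl, leD_andr, leD_top, leD_glb. Qed.
Lemma bC_glb (a b : list (tyC K)) : lC (bigandC (a ++ b)) (andC (bigandC a) (bigandC b)).
Proof. rewrite !bigandC_eq. apply big_app_glb; intros; eauto using leC_refl, leC_trans, leC_andl, leC_andr, leC_top, leC_glb. Qed.

Fixpoint SatC (d : tyD K -> Prop) (k : tyC K -> Prop) (c : tyC K) : Prop :=
  match c with
  | prdC x y => d x /\ k y
  | omC => True
  | andC a b => SatC d k a /\ SatC d k b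
  end.

Lemma SatC_mono d k : filterD le d -> filterC le k ->
  forall c1 c2, lC c1 c2 -> SatC d k c1 -> SatC d k c2.
Proof.
  intros [d0 [dup dand]] [k0 [kup kand]].
  induction 1; simpl; intuition eauto.
Qed.

Fixpoint SatD (f : (tyC K -> Prop) -> tyR K -> Prop) (x : tyD K) : Prop :=
  match x with
  | psiD a => forall k, filterC le k -> f k (psiR a)
  | arrD c r => forall k, filterC le k -> k c -> f k r
  | omD => True
  | andD a b => SatD f a /\ SatD f b
  end.

Lemma SatD_embR f (Hf : forall k, filterC le k -> filterR le (f k)) r :
  SatD f (embR r) <-> forall k, filterC le k -> f k r.
Proof.
  induction r as [a| |r1 IH1 r2 IH2]; simpl.
  - reflexivity.
  - split; intros; auto. apply (Hf k H0).
  - rewrite IH1, IH2. split.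
    + intros [A B] k Hk. destruct (Hf k Hk) as [_ [_ Ha]]. auto.
    + intros H; split; intros k Hk; destruct (Hf k Hk) as [_ [Hu _]];
      (apply Hu with (andR r1 r2); [apply H; auto| first [apply leR_andl | apply leR_andr]]).
Qed.

Lemma SatD_mono f (Hf : forall k, filterC le k -> filterR le (f k)) :
  forall x y, lD x y -> SatD f x -> SatD f y.
Proof.
  induction 1; simpl; intros; try tauto.
  - rewrite SatD_embR in *; auto. intros k Hk. destruct (Hf k Hk) as [_ [Hu _]].
    eapply Hu; eauto.
  - destruct (Hf k H0) as [H3 _]; auto.
  - apply H; auto.
  - apply H; auto. destruct H0; auto.
  - destruct H as [A B]. destruct (Hf k0 H0) as [_ [_ Ha]]. auto.
  - pose proof H2 as Hk2. destruct (Hf k H2) as [_ [Hu _]]. destruct Hk2 as [_ [kup _]].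
    apply Hu with r1; [apply H1; [exact H2|eapply kup; eauto] | auto].
Qed.


Lemma upone_filter c : filterC le (upone (LeC le) c).
Proof.
  split; [|split].
  - apply leC_top.
  - intros s t H1 H2. eapply leC_trans; eauto.
  - intros s t H1 H2. apply leC_glb; auto.
Qed.

Lemma filter_bigD (d : tyD K -> Prop) l : filterD le d -> (forall x, In x l -> d x) -> d (bigandD l).
Proof.
  intros [d0 [_ dand]] H. rewrite bigandD_eq. apply big_pred; auto.
Qed.
Lemma filter_bigC (d : tyC K -> Prop) l : filterC le d -> (forall x, In x l -> d x) -> d (bigandC l).
Proof.
  intros [d0 [_ dand]] H. rewrite bigandC_eq. apply big_pred; auto.
Qed.

Lemma F_part : F_iso_G le.
Proof.
  split; [|split; [|split; [|split; [|split]]]].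
  -
    intros d [d0 [dup dand]]. split; [|split].
    + intros k [k0 [kup kand]]. split; [|split].
      * exists omR; split; [exists omC; split; [eapply dup; [exact d0| apply leD_omarr] | exact k0] | apply leR_refl].
      * intros s t [r [Hr Hrs]] Hst. exists r; split; auto. eapply leR_trans; eauto.
      * intros s t [r1 [[c1 [H1 Hc1]] Hr1]] [r2 [[c2 [H2 Hc2]] Hr2]].
        exists (andR r1 r2). split.
        -- exists (andC c1 c2). split; [|auto].
           eapply dup; [apply (dand _ _ H1 H2)|].
           eapply leD_trans; [|apply leD_arrand].
           apply leD_glb.
           ++ eapply leD_trans; [apply leD_andl| apply leD_arr; [apply leC_andl|apply leR_refl]].
           ++ eapply leD_trans; [apply leD_andr| apply leD_arr; [apply leC_andr|apply leR_refl]].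
        -- apply leR_glb.
           ++ eapply leR_trans; [apply leR_andl|exact Hr1].
           ++ eapply leR_trans; [apply leR_andr|exact Hr2].
    + intros k k' _ _ Hs r [r0 [[c [Hd Hc]] Hr]]. exists r0; split; auto. exists c; auto.
    + intros D HD Hdir r; split.
      * intros [r0 [[c [Hd [X [HX Xc]]]] Hr]]. exists X; split; auto. exists r0; split; auto. exists c; auto.
      * intros [X [HX [r0 [[c [Hd Xc]] Hr]]]]. exists r0; split; auto. exists c; split; auto. exists X; auto.
  -
    intros f Hf. split; [|split].
    + exists omD; split; [exists []; split; [intros p []| reflexivity] | apply leD_refl].
    + intros s t [u [Hu Hus]] Hst. exists u; split; auto. eapply leD_trans; eauto.
    + intros s t [s1 [[l1 [H1 E1]] Hs1]] [s2 [[l2 [H2 E2]] Hs2]].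
      exists (bigandD (map (fun p => arrD (fst p) (snd p)) (l1 ++ l2))). split.
      * exists (l1 ++ l2). split; [|reflexivity].
        intros p Hp. apply in_app_or in Hp. destruct Hp; auto.
      * rewrite map_app. eapply leD_trans; [apply bD_glb|]. subst.
        apply leD_glb.
        -- eapply leD_trans; [apply leD_andl|exact Hs1].
        -- eapply leD_trans; [apply leD_andr|exact Hs2].
  -
    intros d d' _ _ Hs k _ r [r0 [[c [Hd Hc]] Hr]]. exists r0; split; auto. exists c; auto.
  -
    intros f g Hf Hg Hfg x [s [[l [Hl E]] Hs]]. exists s; split; auto. exists l; split; auto.
    intros p Hp. apply Hfg; [apply upone_filter| apply Hl; auto].
  -
    intros d Hd. pose proof Hd as [d0 [dup dand]]. intros x; split.
    + intros [s [[l [Hl E]] Hs]]. subst. eapply dup; [|exact Hs].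
      apply filter_bigD; auto.
      intros y Hy. apply in_map_iff in Hy. destruct Hy as [p [<- Hp]].
      destruct (Hl p Hp) as [r [[c [Hdc Hc]] Hr]].
      eapply dup; [exact Hdc|]. apply leD_arr; auto.
    + intros Hx.
      assert (L : forall x, d x -> exists l : list (tyC K * tyR K),
        (forall p, In p l -> Fmap le d (upone (LeC le) (fst p)) (snd p)) /\
        lD (bigandD (map (fun p => arrD (fst p) (snd p)) l)) x).
      { clear x Hx. induction x as [a|c r| |x1 IH1 x2 IH2]; intros Hx.
        - exists [(omC, psiR a)]. split.
          + intros p [<-|[]]. exists (psiR a). split; [|apply leR_refl].
            exists omC. split; [|apply leC_refl]. eapply dup; [exact Hx|apply leD_psiarr].
          + apply leD_arrpsi.
        - exists [(c, r)]. split.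
          + intros p [<-|[]]. exists r. split; [|apply leR_refl].
            exists c. split; [exact Hx|apply leC_refl].
          + apply leD_refl.
        - exists []. split; [intros p []| apply leD_refl].
        - destruct (IH1 (dup _ _ Hx (leD_andl _ _ _ _))) as [l1 [H1 E1]].
          destruct (IH2 (dup _ _ Hx (leD_andr _ _ _ _))) as [l2 [H2 E2]].
          exists (l1 ++ l2). split.
          + intros p Hp. apply in_app_or in Hp. destruct Hp; auto.
          + rewrite map_app. eapply leD_trans; [apply bD_glb|].
            apply leD_glb.
            -- eapply leD_trans; [apply leD_andl|exact E1].
            -- eapply leD_trans; [apply leD_andr|exact E2]. }
      destruct (L x Hx) as [l [Hl E]].
      eexists; split; [exists l; split; [exact Hl|reflexivity] | exact E].
  -
    intros f Hf k Hk. pose proof Hf as [Hff [Hfm Hfc]].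
    pose proof Hk as [k0 [kup kand]]. intros r; split.
    + intros [r0 [[c [HG Hc]] Hr]]. destruct HG as [s [[l [Hl E]] Hs]].
      assert (Ss : SatD f s).
      { subst s. rewrite bigandD_eq. apply big_pred; [exact I| intros; split; auto|].
        intros y Hy. apply in_map_iff in Hy. destruct Hy as [p [<- Hp]].
        simpl. intros k' Hk' Hc'.
        apply (Hfm (upone (LeC le) (fst p)) k' (upone_filter _) Hk').
        - intros t Ht. destruct Hk' as [_ [kup' _]]. eapply kup'; eauto.
        - apply Hl; auto. }
      pose proof (SatD_mono f Hff _ _ Hs Ss) as S2. simpl in S2.
      destruct (Hff k Hk) as [_ [Hu _]]. eapply Hu; [apply S2; auto| exact Hr].
    + intros Hr.
      set (D := fun X => exists c, k c /\ X = upone (LeC le) c).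
      assert (HDf : forall X, D X -> filterC le X).
      { intros X [c [_ ->]]. apply upone_filter. }
      assert (Hdir : directed subset D).
      { split.
        - exists (upone (LeC le) omC). exists omC; auto.
        - intros X Y [c1 [H1 ->]] [c2 [H2 ->]]. exists (upone (LeC le) (andC c1 c2)).
          split; [exists (andC c1 c2); split; auto|].
          split; intros t Ht; eapply leC_trans; eauto; [apply leC_andl|apply leC_andr]. }
      assert (HU : filterC le (union_fam D)).
      { split; [|split].
        - exists (upone (LeC le) omC). split; [exists omC; auto| apply leC_refl].
        - intros s t [X [[c [Hc ->]] HXs]] Hst. exists (upone (LeC le) c).
          split; [exists c; auto|]. eapply leC_trans; eauto.
        - intros s t [X [[c1 [H1 ->]] Hs1]] [Y [[c2 [H2 ->]] Hs2]].
          exists (upone (LeC le) (andC c1 c2)). split; [exists (andC c1 c2); auto|].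
          apply leC_glb.
          + eapply leC_trans; [apply leC_andl|exact Hs1].
          + eapply leC_trans; [apply leC_andr|exact Hs2]. }
      assert (Hsub : subset k (union_fam D)).
      { intros c Hc. exists (upone (LeC le) c). split; [exists c; auto| apply leC_refl]. }
      pose proof (Hfm k _ Hk HU Hsub r Hr) as Hr2.
      apply (Hfc D HDf Hdir r) in Hr2. destruct Hr2 as [X [[c [Hc ->]] HX]].
      exists r. split; [|apply leR_refl]. exists c. split; [|exact Hc].
      exists (arrD c r). split; [|apply leD_refl].
      exists [(c, r)]. split; [intros p [<-|[]]; exact HX| reflexivity].
Qed.


Lemma H_part : H_iso_K le.
Proof.
  split; [|split; [|split; [|split; [|split]]]].
  - intros k [k0 [kup kand]]. simpl. split; (split; [|split]).
    + exists omC. eapply kup; [exact k0| apply leC_omprd].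
    + intros s t [c Hc] Hst. exists c. eapply kup; [exact Hc| apply leC_prd; [exact Hst|apply leC_refl]].
    + intros s t [c1 H1] [c2 H2]. exists (andC c1 c2).
      eapply kup; [exact (kand _ _ H1 H2)| apply leC_prdand].
    + exists omD. eapply kup; [exact k0| apply leC_omprd].
    + intros s t [x Hx] Hst. exists x. eapply kup; [exact Hx| apply leC_prd; [apply leD_refl|exact Hst]].
    + intros s t [x1 H1] [x2 H2]. exists (andD x1 x2).
      eapply kup; [exact (kand _ _ H1 H2)| apply leC_prdand].
  - intros d k Hd Hk. simpl. split; [|split].
    + exists omC; split; [exists []; split; [intros p []| reflexivity] | apply leC_refl].
    + intros s t [u [Hu Hus]] Hst. exists u; split; auto. eapply leC_trans; eauto.
    + intros s t [s1 [[l1 [H1 E1]] Hs1]] [s2 [[l2 [H2 E2]] Hs2]].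
      exists (bigandC (map (fun p => prdC (fst p) (snd p)) (l1 ++ l2))). split.
      * exists (l1 ++ l2). split; [|reflexivity].
        intros p Hp. apply in_app_or in Hp. destruct Hp; auto.
      * rewrite map_app. eapply leC_trans; [apply bC_glb|]. subst.
        apply leC_glb.
        -- eapply leC_trans; [apply leC_andl|exact Hs1].
        -- eapply leC_trans; [apply leC_andr|exact Hs2].
  - intros k k' _ _ Hs. simpl. split.
    + intros x [c Hc]. exists c; auto.
    + intros x [c Hc]. exists c; auto.
  - intros d k d' k' _ _ _ _ Hd Hk x [s [[l [Hl E]] Hs]]. exists s; split; auto.
    exists l; split; auto. intros p Hp. destruct (Hl p Hp); simpl in *; auto.
  - intros k Hk. pose proof Hk as [k0 [kup kand]]. intros x; split.
    + intros [s [[l [Hl E]] Hs]]. subst. eapply kup; [|exact Hs].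
      apply filter_bigC; auto.
      intros y Hy. apply in_map_iff in Hy. destruct Hy as [p [<- Hp]].
      destruct (Hl p Hp) as [[c Hc] [z Hz]].
      eapply kup; [exact (kand _ _ Hc Hz)|].
      eapply leC_trans; [apply leC_prdand|]. apply leC_prd; [apply leD_andl|apply leC_andr].
    + intros Hx.
      assert (L : forall x, k x -> exists l : list (tyD K * tyC K),
        (forall p, In p l -> fst (Hmap le k) (fst p) /\ snd (Hmap le k) (snd p)) /\
        lC (bigandC (map (fun p => prdC (fst p) (snd p)) l)) x).
      { clear x Hx. induction x as [z c _| |x1 IH1 x2 IH2]; intros Hx.
        - exists [(z, c)]. split.
          + intros p [<-|[]]. simpl. split; [exists c|exists z]; exact Hx.
          + apply leC_refl.
        - exists []. split; [intros p []| apply leC_refl].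
        - destruct (IH1 (kup _ _ Hx (leC_andl _ _ _ _))) as [l1 [H1 E1]].
          destruct (IH2 (kup _ _ Hx (leC_andr _ _ _ _))) as [l2 [H2 E2]].
          exists (l1 ++ l2). split.
          + intros p Hp. apply in_app_or in Hp. destruct Hp; auto.
          + rewrite map_app. eapply leC_trans; [apply bC_glb|].
            apply leC_glb.
            -- eapply leC_trans; [apply leC_andl|exact E1].
            -- eapply leC_trans; [apply leC_andr|exact E2]. }
      destruct (L x Hx) as [l [Hl E]].
      eexists; split; [exists l; split; [exact Hl|reflexivity] | exact E].
  - intros d k Hd Hk. pose proof Hd as [d0 _]. pose proof Hk as [k0 _].
    assert (Sat : forall x c, Kmap le (d, k) (prdC x c) -> d x /\ k c).
    { intros x c [s [[l [Hl E]] Hs]].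
      assert (Ss : SatC d k s).
      { subst s. rewrite bigandC_eq. apply big_pred; [exact I| intros; split; auto|].
        intros y Hy. apply in_map_iff in Hy. destruct Hy as [p [<- Hp]].
        simpl. apply Hl; auto. }
      exact (SatC_mono d k Hd Hk _ _ Hs Ss). }
    simpl. split; intros x; split.
    + intros [c Hc]. apply (Sat _ _ Hc).
    + intros Hx. exists omC. exists (prdC x omC). split; [|apply leC_refl].
      exists [(x, omC)]. split; [intros p [<-|[]]; simpl; auto| reflexivity].
    + intros [z Hc]. apply (Sat _ _ Hc).
    + intros Hx. exists omD. exists (prdC omD x). split; [|apply leC_refl].
      exists [(omD, x)]. split; [intros p [<-|[]]; simpl; auto| reflexivity].
Qed.

End Main.

Theorem theorem3p27 (T : Type) (le : T -> T -> Prop)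
  (HR : omega_algebraic_lattice le) :
  F_iso_G le /\ H_iso_K le.
Proof. split; [apply F_part | apply H_part]. Qed.
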